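(* Let $d\geq 3$ and $n\geq 1$ be integers, let $1\leq l\leq n$, let $v_1,\dots,v_l\in\mathbb R^n$ be orthonormal, and let $\lambda_1,\dots,\lambda_l\in\mathbb R$ be nonzero. Let $T=\sum_{i=1}^l\lambda_i v_i^{\otimes d}\in S^d(\mathbb R^n)$, i.e. $f_T(x)=\sum_{i=1}^l\lambda_i(v_i\cdot x)^d$. Let $V\in\mathbb R^{l\times n}$ be the matrix with rows $v_1,\dots,v_l$, and fix for each $i$ a $(d-2)$-nd root $\lambda_i^{1/(d-2)}\in\mathbb C$ of $\lambda_i$ (write $\lambda_i^{-1/(d-2)}$ for its inverse). For every $k\in\{1,\dots,l\}$, every subset $\mathcal I=\{i_1<i_2<\dots<i_k\}\subseteq\{1,\dots,l\}$ and every $(k-1)$-tuple $(\eta_1,\dots,\eta_{k-1})$ of $(d-2)$-nd roots of unity, define $y\in\mathbb C^l$ by $$y_i=\begin{cases}\eta_j\lambda_{i_j}^{-1/(d-2)} & \text{if } i=i_j,\ j\in\{1,\dots,k-1\},\\ \lambda_{i_k}^{-1/(d-2)} & \text{if } i=i_k,\\ 0 & \text{if } i\notin\mathcal I,\end{cases}$$ and $w=V^Ty\in\mathbb C^n$. Then each such $w$ is an eigenvector of $T$; these vectors $w$ are, up to scaling, $\frac{(d-1)^l-1}{d-2}$ distinct eigenvectors of $T$ in $\mathbb C^n$; and every eigenvector of $T$ is, up to scaling, either one of these vectors $w$ or a nonzero element of the nullspace of $V$ (and every nonzero element of the nullspace of $V$ is an eigenvector of $T$).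
   Context: $S^d(\mathbb R^n)$ (resp. $S^d(\mathbb C^n)$) denotes the space of real (resp. complex) symmetric tensors of order $d$ and dimension $n$, i.e. arrays $(T_{i_1\dots i_d})_{i_j\in\{1,\dots,n\}}$ invariant under permutation of indices. The associated polynomial is $f_T(x)=\sum_{i_1,\dots,i_d}T_{i_1\dots i_d}x_{i_1}\cdots x_{i_d}$. A nonzero vector $w\in\mathbb C^n$ is an eigenvector of $T$ if there is $\lambda\in\mathbb C$ with $Tw^{d-1}=\lambda w$, where $(Tw^{d-1})_i=\sum_{i_2,\dots,i_d}T_{i,i_2,\dots,i_d}w_{i_2}\cdots w_{i_d}$; equivalently $\nabla f_T(w)$ and $w$ are parallel. Eigenvectors are counted up to nonzero scaling. *)

(* Defs.v *)
From HB Require Import structures.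
From mathcomp Require Import all_boot all_order all_algebra.
From mathcomp Require Import reals complex.
Set Implicit Arguments. Unset Strict Implicit. Unset Printing Implicit Defensive.
Import Order.TTheory GRing.Theory Num.Theory.
Local Open Scope ring_scope.

Section Defs.
Variable R : realType.
Local Notation C := R[i].

Definition rc (x : R) : C := (x%:C)%C.

(* A (symmetric) tensor of order d and dimension n is represented by its
   entries T (i_1 :: ... :: i_d), for index sequences of length d. *)
Definition rank1_sum_tensor l n (lam : 'I_l -> R) (V : 'M[R]_(l, n))
  (s : seq 'I_n) : R :=
  \sum_(i < l) lam i * \prod_(a <- s) V i a.

(* (T w^{d-1})_a = sum_{i_2..i_d} T_{a i_2 .. i_d} w_{i_2} ... w_{i_d} *)
Definition tensor_apply (d n : nat) (T : seq 'I_n -> R) (w : 'I_n -> C)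
  (a : 'I_n) : C :=
  \sum_(t : (d.-1).-tuple 'I_n) rc (T (a :: val t)) * \prod_(b <- t) w b.

Definition is_eigenvector (d n : nat) (T : seq 'I_n -> R) (w : 'I_n -> C) :=
  (exists a, w a != 0) /\
  exists mu : C, forall a, tensor_apply d T w a = mu * w a.

Definition parallel n (w w' : 'I_n -> C) :=
  exists c : C, c != 0 /\ forall a, w' a = c * w a.

Definition in_nullspace l n (V : 'M[R]_(l, n)) (w : 'I_n -> C) :=
  forall i : 'I_l, \sum_(a < n) rc (V i a) * w a = 0.

(* admissible data: k in {1..l}, I = {iota 0 < ... < iota (k-1)},
   eta_0 .. eta_{k-2} are (d-2)-nd roots of unity (0-based indexing). *)
Definition admissible (d l k : nat) (iota : 'I_k -> 'I_l) (eta : nat -> C) :=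
  [/\ (1 <= k <= l)%N,
      (forall j j' : 'I_k, (j < j')%N -> (iota j < iota j')%N) &
      (forall j : nat, (j < k.-1)%N -> eta j ^+ (d - 2) = 1)].

(* y_i = eta_j * r_{i_j}^{-1} if i = i_j (j < k), r_{i_k}^{-1} if i = i_k,
   0 otherwise; here r i is the fixed (d-2)-nd root of lam_i. *)
Definition yvec l (r : 'I_l -> C) k (iota : 'I_k -> 'I_l) (eta : nat -> C)
  (i : 'I_l) : C :=
  \sum_(j < k | iota j == i)
     (if (j < k.-1)%N then eta j else 1) * (r (iota j))^-1.

Definition wvec l n (V : 'M[R]_(l, n)) (r : 'I_l -> C) k
  (iota : 'I_k -> 'I_l) (eta : nat -> C) (a : 'I_n) : C :=
  \sum_(i < l) rc (V i a) * yvec r iota eta i.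

End Defs.

(* Main.v *)
Require Import Defs.
From HB Require Import structures.
From mathcomp Require Import all_boot all_order all_algebra all_fingroup all_solvable all_field.
From mathcomp Require Import reals complex ring zify.
From Stdlib Require Import FunctionalExtensionality.
Set Implicit Arguments. Unset Strict Implicit. Unset Printing Implicit Defensive.
Import Order.TTheory GRing.Theory Num.Theory.
Local Open Scope ring_scope.

Section S.
Variable R : realType.
Local Notation C := R[i].

Lemma rcM (x y : R) : rc (x * y) = rc x * rc y.
Proof. by rewrite /rc rmorphM. Qed.

Lemma sum_tuple_prod n k (x : 'I_n -> C) :
  \sum_(t : k.-tuple 'I_n) \prod_(b <- t) x b = (\sum_b x b) ^+ k.
Proof.
rewrite -[k in RHS]card_ord -prodr_const bigA_distr_bigA /=.
rewrite (reindex (fun f : {ffun 'I_k -> 'I_n} => [tuple f i | i < k])) /=.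
  by apply: eq_bigr => f _; rewrite big_map big_enum.
exists (fun t : k.-tuple 'I_n => [ffun i => tnth t i]) => [f _|t _].
  by apply/ffunP => i; rewrite ffunE tnth_mktuple.
by apply: eq_from_tnth => i; rewrite tnth_mktuple ffunE.
Qed.

Definition Vmul l n (V : 'M[R]_(l, n)) (w : 'I_n -> C) (i : 'I_l) :=
  \sum_(b < n) rc (V i b) * w b.
Definition VT l n (V : 'M[R]_(l, n)) (y : 'I_l -> C) (a : 'I_n) :=
  \sum_(i < l) rc (V i a) * y i.

Lemma tensor_applyE d l n (lam : 'I_l -> R) (V : 'M[R]_(l, n)) w a :
  tensor_apply d (rank1_sum_tensor lam V) w a =
  \sum_i rc (V i a) * (rc (lam i) * Vmul V w i ^+ d.-1).
Proof.
rewrite /tensor_apply.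
under eq_bigr do rewrite /rank1_sum_tensor /rc rmorph_sum big_distrl /=.
rewrite exchange_big /=; apply: eq_bigr => i _.
rewrite /Vmul -sum_tuple_prod !big_distrr /=; apply: eq_bigr => t _.
rewrite big_cons !rmorphM /= rmorph_prod big_split /=.
by rewrite /rc; ring.
Qed.

Lemma orthoC l n (V : 'M[R]_(l, n)) : V *m V^T = 1%:M ->
  forall i j, \sum_a rc (V i a) * rc (V j a) = (i == j)%:R.
Proof.
move=> H i j; have := congr1 (fun M : 'M[R]_l => M i j) H; rewrite !mxE => E.
rewrite /rc -(rmorph_nat (real_complex R)) -E rmorph_sum; apply: eq_bigr => a _.
by rewrite mxE rmorphM.
Qed.

Lemma Vmul_VT l n (V : 'M[R]_(l, n)) y : V *m V^T = 1%:M ->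
  Vmul V (VT V y) =1 y.
Proof.
move=> H j; rewrite /Vmul /VT.
under eq_bigr do rewrite big_distrr.
rewrite exchange_big /= (bigD1 j) //= [X in _ + X]big1 => [|i ij].
  rewrite addr0 (eq_bigr (fun a => rc (V j a) * rc (V j a) * y j)) => [|a _].
    by rewrite -big_distrl /= orthoC // eqxx mul1r.
  by rewrite mulrCA mulrA.
rewrite (eq_bigr (fun a => rc (V j a) * rc (V i a) * y i)) => [|a _].
  by rewrite -big_distrl /= orthoC // eq_sym (negbTE ij) mul0r.
by rewrite mulrA.
Qed.


Lemma Vmul_lin l n (V : 'M[R]_(l, n)) (c : C) w i :
  Vmul V (fun a => c * w a) i = c * Vmul V w i.
Proof. by rewrite /Vmul big_distrr; apply: eq_bigr => a _; rewrite mulrCA. Qed.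

Lemma VT_lin l n (V : 'M[R]_(l, n)) (c : C) y a :
  VT V (fun i => c * y i) a = c * VT V y a.
Proof. by rewrite /VT big_distrr; apply: eq_bigr => i _; rewrite mulrCA. Qed.

Lemma VT_ext l n (V : 'M[R]_(l, n)) y y' : y =1 y' -> VT V y =1 VT V y'.
Proof. by move=> E a; apply: eq_bigr => i _; rewrite E. Qed.

Lemma eig_of_y m l n (V : 'M[R]_(l, n)) (lam : 'I_l -> R) (r : 'I_l -> C) y :
  V *m V^T = 1%:M -> (forall i, r i ^+ m = rc (lam i)) ->
  (exists i, y i != 0) -> (forall i, y i != 0 -> (y i * r i) ^+ m = 1) ->
  is_eigenvector m.+2 (rank1_sum_tensor lam V) (VT V y).
Proof.
move=> HV Hr [i0 yi0] Hy; split.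
  case: (pickP (fun a => VT V y a != 0)) => [a Ha|H0]; first by exists a.
  case/negP: yi0; rewrite -(Vmul_VT y HV) /Vmul big1 // => a _.
  by have := H0 a => /negbFE/eqP ->; rewrite mulr0.
exists 1 => a; rewrite tensor_applyE mul1r; apply: eq_bigr => i _.
rewrite (Vmul_VT y HV) /=; congr (_ * _).
have [->|yi] := eqVneq (y i) 0; first by rewrite expr0n mulr0.
by rewrite -Hr exprSr mulrA -exprMn [r i * y i]mulrC Hy // mul1r.
Qed.

Lemma rc_neq0 (x : R) : x != 0 -> rc x != 0.
Proof.
move=> h; apply/eqP => E; have : rc x = rc 0 by rewrite E /rc rmorph0.
by move/complexI => /eqP; rewrite (negbTE h).
Qed.

Lemma eig_classify m l n (V : 'M[R]_(l, n)) (lam : 'I_l -> R) w :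
  V *m V^T = 1%:M -> (forall i, lam i != 0) ->
  is_eigenvector m.+2 (rank1_sum_tensor lam V) w ->
  (forall i, Vmul V w i = 0) \/
  (w =1 VT V (Vmul V w) /\ exists mu : C, mu != 0 /\
     forall i, Vmul V w i != 0 -> rc (lam i) * Vmul V w i ^+ m = mu).
Proof.
move=> HV Hl [_ [mu Hmu]].
set z := Vmul V w.
pose q i := rc (lam i) * z i ^+ m.+1.
have Hq a : VT V q a = mu * w a by rewrite -Hmu tensor_applyE.
have Hq2 j : q j = mu * z j.
  by rewrite -(Vmul_VT q HV) -Vmul_lin; apply: eq_bigr => a _; rewrite Hq.
have [mu0|mu0] := eqVneq mu 0.
  left => j; have := Hq2 j; rewrite mu0 mul0r /q => /eqP.
  by rewrite mulf_eq0 (negbTE (rc_neq0 (Hl j))) expf_eq0 /= => /eqP.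
right; split.
  move=> a; rewrite -[w a]mul1r -(mulVf mu0) -mulrA -Hq -VT_lin.
  by apply: eq_bigr => i _; rewrite Hq2 mulKf.
by exists mu; split => // i zi; apply: (mulIf zi); rewrite -Hq2 /q exprS; ring.
Qed.


Definition good l (r : 'I_l -> C) m (y : 'I_l -> C) :=
  [/\ exists i, y i != 0, forall i, y i != 0 -> (y i * r i) ^+ m = 1 &
      exists p : 'I_l, y p * r p = 1 /\ forall i : 'I_l, (p < i)%N -> y i = 0].

Lemma yvec_iota l (r : 'I_l -> C) k (iota : 'I_k -> 'I_l) eta j :
  (forall j j' : 'I_k, (j < j')%N -> (iota j < iota j')%N) ->
  yvec r iota eta (iota j) = (if (j < k.-1)%N then eta j else 1) * (r (iota j))^-1.
Proof.
move=> Hmon; rewrite /yvec (big_pred1 j) // => j'.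
apply/eqP/eqP => [E|->] //; apply: val_inj => /=.
case: (ltngtP j' j) => // [/Hmon|/Hmon]; rewrite E ltnn //.
Qed.

Lemma yvec_out l (r : 'I_l -> C) k (iota : 'I_k -> 'I_l) eta i :
  (forall j, iota j != i) -> yvec r iota eta i = 0.
Proof. by move=> H; rewrite /yvec big_pred0 // => j; rewrite (negbTE (H j)). Qed.

Lemma adm_good d l (r : 'I_l -> C) k (iota : 'I_k -> 'I_l) eta :
  (forall i, r i != 0) -> admissible d iota eta ->
  good r (d - 2) (yvec r iota eta).
Proof.
move=> Hr [/andP[k1 kl] Hmon Heta].
have kk : (k.-1 < k)%N by rewrite prednK.
pose jk := Ordinal kk.
have Hk : yvec r iota eta (iota jk) = (r (iota jk))^-1.
  by rewrite yvec_iota // ltnn mul1r.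
split.
- by exists (iota jk); rewrite Hk invr_eq0.
- move=> i; case: (pickP (fun j => iota j == i)) => [j /eqP <-|H0]; last first.
    by rewrite yvec_out ?eqxx // => j; rewrite H0.
  rewrite yvec_iota // -mulrA mulVf // mulr1 => _.
  by case: ifP => [/Heta //|_]; rewrite expr1n.
- exists (iota jk); split; first by rewrite Hk mulVf.
  move=> i lt; apply: yvec_out => j; apply/eqP => E; move: lt; rewrite -E.
  have : (j <= k.-1)%N by rewrite -ltnS prednK.
  rewrite leq_eqVlt => /orP[/eqP ej|h].
    by rewrite (_ : j = jk) ?ltnn //; apply: val_inj.
  by move=> h2; have := ltn_trans (Hmon j jk h) h2; rewrite ltnn.
Qed.

Lemma good_adm d l (r : 'I_l -> C) y :
  (forall i, r i != 0) -> good r (d - 2) y ->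
  exists k (iota : 'I_k -> 'I_l) (eta : nat -> C),
    admissible d iota eta /\ forall i, yvec r iota eta i = y i.
Proof.
move=> Hr [_ Hy [p [yp Hp]]].
have yp0 : y p != 0 by apply/eqP => E; move: yp; rewrite E mul0r => /eqP; rewrite eq_sym oner_eq0.
pose s := [seq i <- enum 'I_l | y i != 0].
have mems i : (i \in s) = (y i != 0) by rewrite mem_filter mem_enum andbT.
have us : uniq s by rewrite filter_uniq // enum_uniq.
have ltr_tr : transitive (fun i j : 'I_l => (i < j)%N) by move=> ? ? ?; apply: ltn_trans.
have ss : sorted (fun i j : 'I_l => (i < j)%N) s.
  apply: sorted_filter => //.
  by have := iota_ltn_sorted 0 l; rewrite -val_enum_ord sorted_map.
pose k := size s.
pose iota := fun j : 'I_k => nth p s j.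
pose eta := fun j : nat => y (nth p s j) * r (nth p s j).
have ps : p \in s by rewrite mems.
have k1 : (1 <= k)%N by rewrite lt0n size_eq0; apply/eqP => E; rewrite E in ps.
have Hmon : forall j j' : 'I_k, (j < j')%N -> (iota j < iota j')%N.
  by move=> j j' jj; apply: (sorted_ltn_nth ltr_tr p ss) => //; rewrite inE ltn_ord.
have iotas j : y (iota j) != 0 by rewrite -mems mem_nth.
exists k, iota, eta; split.
  split => //; first by rewrite k1 /k size_filter (leq_trans (count_size _ _)) // size_enum_ord.
  by move=> j jk; rewrite /eta; apply: Hy; rewrite -mems mem_nth // (leq_trans jk) // leq_pred.
move=> i; have [yi0|yi] := eqVneq (y i) 0.
  rewrite yi0 yvec_out // => j; apply/eqP => E; have := iotas j; by rewrite E yi0 eqxx.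
have is_ : i \in s by rewrite mems.
pose j0 := Ordinal (etrans (index_mem i s) is_) : 'I_k.
have ij0 : iota j0 = i by rewrite /iota /= nth_index.
rewrite -ij0 yvec_iota // ij0; case: ifP => [_|lt].
  by rewrite /eta /= nth_index // mulfK.
have ej0 : j0 = k.-1 :> nat.
  apply/eqP; rewrite eqn_leq [(k.-1 <= _)%N]leqNgt lt andbT -ltnS prednK //.
have pi : i = p.
  apply: val_inj; apply/eqP; rewrite eqn_leq; apply/andP; split.
    by rewrite leqNgt; apply/negP => /Hp; apply/eqP.
  pose jp := Ordinal (etrans (index_mem p s) ps) : 'I_k.
  have ijp : iota jp = p by rewrite /iota /= nth_index.
  have : (jp <= j0)%N by rewrite ej0 -ltnS prednK.
  rewrite leq_eqVlt => /orP[/eqP e|/Hmon]; last by rewrite ijp ij0 => /ltnW.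
  by rewrite -ij0 -ijp (_ : jp = j0) //; apply: val_inj.
by rewrite mul1r pi -[y p]mulr1 -(mulfV (Hr p)) mulrA yp mul1r.
Qed.

Lemma prim_exists m : (0 < m)%N -> {z : C | m.-primitive_root z}.
Proof.
pose p : {poly C} := 'X^m - 1; have [r Dp] := closed_field_poly_normal p.
move=> n_gt0; apply/sigW; rewrite (monicP _) ?monicXnsubC // scale1r in Dp.
have rn1: all m.-unity_root r by apply/allP=> z; rewrite -root_prod_XsubC -Dp.
have sz_r: (m < (size r).+1)%N.
  by rewrite -(size_prod_XsubC r id) -Dp size_XnsubC.
have [|z] := hasP (has_prim_root n_gt0 rn1 _ sz_r); last by exists z.
by rewrite -separable_prod_XsubC -Dp separable_Xn_sub_1 // pnatr_eq0 -lt0n.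
Qed.

Definition e m (z : C) (j : 'I_m.+1) : C := if (j : nat) == 0%N then 0 else z ^+ j.-1.

Section E.
Variables (m : nat) (z : C).
Hypothesis m0 : (0 < m)%N.
Hypothesis pz : m.-primitive_root z.

Lemma z_neq0 : z != 0.
Proof. by apply/eqP => z0; have := prim_expr_order pz; rewrite z0 expr0n eqn0Ngt m0 /= => /eqP; rewrite eq_sym oner_eq0. Qed.

Lemma e0 (j : 'I_m.+1) : (e z j == 0) = ((j : nat) == 0%N).
Proof.
rewrite /e; case: j => [[|jj] Hj] /=; first by rewrite ?eqxx.
by rewrite expf_eq0 (negbTE z_neq0) andbF.
Qed.

Lemma e_pow (j : 'I_m.+1) : (j : nat) != 0%N -> e z j ^+ m = 1.
Proof. by rewrite /e => /negbTE ->; rewrite -exprM mulnC exprM (prim_expr_order pz) expr1n. Qed.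

Lemma e_inj : injective (@e m z).
Proof.
move=> [[|a] Ha] [[|b] Hb]; rewrite /e /= => E; apply: val_inj => //=.
- by move/eqP: E; rewrite eq_sym expf_eq0 (negbTE z_neq0) andbF.
- by move/eqP: E; rewrite expf_eq0 (negbTE z_neq0) andbF.
- move/eqP: E; rewrite (eq_prim_root_expr pz) !modn_small //.
  by move/eqP ->.
Qed.

End E.

Definition Aset l m : {set {ffun 'I_l -> 'I_m.+1}} :=
  [set g : {ffun 'I_l -> 'I_m.+1} | [exists p : 'I_l, ((g p : nat) == 1%N) &&
            [forall i : 'I_l, (p < i)%N ==> ((g i : nat) == 0%N)]]].

Definition yg l m (z : C) (r : 'I_l -> C) (g : {ffun 'I_l -> 'I_m.+1}) i :=
  e z (g i) / r i.

Section A.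
Variables (m : nat) (z : C).
Hypothesis m0 : (0 < m)%N.
Hypothesis pz : m.-primitive_root z.
Variables (l : nat) (r : 'I_l -> C).
Hypothesis Hr : forall i, r i != 0.

Lemma e_eq1 (j : 'I_m.+1) : e z j = 1 -> (j : nat) == 1%N.
Proof.
case: j => [[|[|a]] Ha]; rewrite /e //=.
  by move/eqP; rewrite eq_sym oner_eq0.
move/eqP; rewrite -(prim_order_dvd pz) => /(dvdn_leq (ltn0Sn _)).
by rewrite leqNgt -ltnS Ha.
Qed.

Lemma e_1 (j : 'I_m.+1) : (j : nat) == 1%N -> e z j = 1.
Proof. by rewrite /e => /eqP ->; rewrite expr0. Qed.

Lemma inA_good g : g \in Aset l m -> good r m (yg z r g).
Proof.
rewrite inE => /existsP [p /andP [gp /forallP Hi]].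
have yp : yg z r g p * r p = 1 by rewrite /yg divfK // e_1.
split.
- by exists p; apply/eqP => E; move: yp; rewrite E mul0r => /eqP; rewrite eq_sym oner_eq0.
- move=> i nz; rewrite /yg divfK //; apply: e_pow => //.
  by rewrite -(e0 m0 pz); apply: contra nz => /eqP E; rewrite mulf_eq0 E eqxx.
- exists p; split => // i pi; have := Hi i; rewrite pi /= => /eqP gi.
  by rewrite /yg /e gi mul0r.
Qed.

Lemma good_inA y : good r m y ->
  exists g, g \in Aset l m /\ forall i, yg z r g i = y i.
Proof.
move=> [_ Hy [p [yp Hp]]].
pose g := [ffun i => odflt ord0 [pick j : 'I_m.+1 | e z j == y i * r i]].
have He i : e z (g i) = y i * r i.
  rewrite ffunE; case: pickP => [j /eqP //|H0]; exfalso.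
  have [yi0|yi] := eqVneq (y i) 0.
    by have := H0 ord0; rewrite /e /= yi0 mul0r eqxx.
  have [j' Hj'] := prim_rootP pz (Hy i yi).
  by have := H0 (inord j'.+1); rewrite /e inordK ?ltnS //= -Hj' eqxx.
exists g; split; last by move=> i; rewrite /yg He mulfK.
rewrite inE; apply/existsP; exists p; rewrite e_eq1 ?He //=.
apply/forallP => i; apply/implyP => pi.
by rewrite -(e0 m0 pz) He Hp // mul0r.
Qed.

End A.

Lemma par_good l (r : 'I_l -> C) m y y' (c : C) :
  good r m y -> good r m y' -> (forall i, y' i = c * y i) -> forall i, y i = y' i.
Proof.
move=> [_ _ [p [yp Hp]]] [_ _ [p' [yp' Hp']]] Hc.
have nz1 (x : C) : x * r p = 1 -> x != 0.
  by move=> h; apply/eqP => E; move: h; rewrite E mul0r => /eqP; rewrite eq_sym oner_eq0.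
have nz2 (x : C) : x * r p' = 1 -> x != 0.
  by move=> h; apply/eqP => E; move: h; rewrite E mul0r => /eqP; rewrite eq_sym oner_eq0.
have ypp : p = p'.
  apply: val_inj; case: (ltngtP p p') => // [/Hp|/Hp'] E.
    by have := nz2 _ yp'; rewrite Hc E mulr0 eqxx.
  have c0 : c != 0.
    by apply/eqP => c0; have := nz2 _ yp'; rewrite Hc c0 mul0r eqxx.
  by move: E; rewrite Hc => /eqP; rewrite mulf_eq0 (negbTE c0) (negbTE (nz1 _ yp)).
subst p'.
have c1 : c = 1 by move: yp'; rewrite Hc -mulrA yp mulr1.
by move=> i; rewrite Hc c1 mul1r.
Qed.

Lemma geom m l : (m * \sum_(p < l) m.+1 ^ p = m.+1 ^ l - 1)%N.
Proof.
elim: l => [|l IH]; first by rewrite big_ord0 muln0 expn0.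
rewrite big_ord_recr /= mulnDr IH expnS.
have : (0 < m.+1 ^ l)%N by rewrite expn_gt0.
set x := (m.+1 ^ l)%N; nia.
Qed.


Lemma card_Ap l m (p : 'I_l) : (0 < m)%N ->
  #|[pred g : {ffun 'I_l -> 'I_m.+1} | ((g p : nat) == 1%N) &&
     [forall i : 'I_l, (p < i)%N ==> ((g i : nat) == 0%N)]]| = (m.+1 ^ p)%N.
Proof.
move=> m0.
pose F := fun i : 'I_l => if (i < p)%N then [pred j : 'I_m.+1 | true]
  else if i == p then [pred j : 'I_m.+1 | (j : nat) == 1%N]
  else [pred j : 'I_m.+1 | (j : nat) == 0%N].
rewrite (@eq_card _ _ (family F)) => [|g].
  rewrite card_family foldrE big_map big_enum /=.
  rewrite (eq_bigr (fun i : 'I_l => if (i < p)%N then m.+1 else 1%N)) => [|i _].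
    rewrite -(big_mkord xpredT (fun i => if (i < p)%N then m.+1 else 1%N)).
    rewrite (@big_cat_nat _ _ _ p 0 l) /= ?(ltnW (ltn_ord p)) //.
    rewrite (eq_big_nat _ _ (F2:=fun=> m.+1)) => [|i /andP[_ ->]] //.
    rewrite [X in (_ * X)%N](eq_big_nat _ _ (F2:=fun=> 1%N)) => [|i /andP[H _]]; last first.
      by rewrite ltnNge H.
    by rewrite !prod_nat_const_nat exp1n muln1 subn0.
  rewrite /F; case: ifP => _.
    by rewrite -[RHS](card_ord m.+1); apply: eq_card.
  case: ifP => _.
    rewrite (@eq_card _ _ (pred1 (inord 1))) ?card1 // => j.
    rewrite !inE; apply/eqP/eqP => [h|->].
      by apply: val_inj; rewrite /= inordK ?ltnS.
    by rewrite inordK ?ltnS.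
  rewrite (@eq_card _ _ (pred1 ord0)) ?card1 // => j.
apply/andP/forallP => [[gp /forallP H] i|H].
  rewrite /finfun.fmem /F; case: ltnP => ip; first by [].
  case: eqP => [-> //|ne]; rewrite inE.
  have pi : (p < i)%N by rewrite ltn_neqAle ip andbT; apply/eqP => E; apply: ne; apply: val_inj.
  by have := H i; rewrite pi.
split; first by have := H p; rewrite /finfun.fmem /F ltnn eqxx.
apply/forallP => i; apply/implyP => pi; have := H i.
rewrite /finfun.fmem /F ltnNge (ltnW pi) /= (_ : (i == p) = false) //.
by apply/negbTE; rewrite -val_eqE /= gtn_eqF.
Qed.


Lemma card_A l m : (0 < m)%N -> #|Aset l m| = (\sum_(p < l) m.+1 ^ p)%N.
Proof.
move=> m0.
pose P (p : 'I_l) (g : {ffun 'I_l -> 'I_m.+1}) := ((g p : nat) == 1%N) &&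
     [forall i : 'I_l, (p < i)%N ==> ((g i : nat) == 0%N)].
have uniqP p p' g : P p g -> P p' g -> p = p'.
  move=> /andP[g1 /forallP H] /andP[g1' /forallP H']; apply: val_inj.
  case: (ltngtP p p') => // lt.
    by have := H p'; rewrite lt (eqP g1').
  by have := H' p; rewrite lt (eqP g1).
rewrite -sum1_card big_mkcond /=.
rewrite (eq_bigr (fun g => \sum_p (P p g : nat))%N) => [|g _].
  rewrite exchange_big /=; apply: eq_bigr => p _.
  rewrite -(card_Ap p m0) -sum1_card [RHS]big_mkcond /=.
  by apply: eq_bigr => g _; rewrite inE /P; case: ifP.
rewrite -big_mkcond /=.
case: ifP => gA.
  move: (gA); rewrite inE => /existsP [p0 Hp0].
  rewrite (big_pred1 p0) // => p; apply/idP/eqP => [Hp|->] //.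
  exact: uniqP Hp Hp0.
rewrite big_pred0 // => p; apply/negbTE; apply: contraFN gA => Hp.
by rewrite inE; apply/existsP; exists p.
Qed.

End S.

Unset Implicit Arguments.
Theorem theorem2p3 (R : realType) (d n l : nat) (V : 'M[R]_(l, n))
  (lam : 'I_l -> R) (r : 'I_l -> R[i]) :
  (3 <= d)%N -> (1 <= n)%N -> (1 <= l)%N -> (l <= n)%N ->
  V *m V^T = 1%:M ->
  (forall i, lam i != 0) ->
  (forall i, r i ^+ (d - 2) = rc (lam i)) ->
  let T := rank1_sum_tensor lam V in
  (* each w is an eigenvector *)
  (forall k (iota : 'I_k -> 'I_l) (eta : nat -> R[i]),
      admissible d iota eta -> is_eigenvector d T (wvec V r iota eta)) /\
  (* up to scaling, they are exactly ((d-1)^l - 1)/(d-2) distinct vectors *)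
  (exists f : 'I_(((d.-1) ^ l - 1) %/ (d - 2)) -> ('I_n -> R[i]),
      (forall m, exists k (iota : 'I_k -> 'I_l) (eta : nat -> R[i]),
          admissible d iota eta /\ f m = wvec V r iota eta) /\
      (forall m m', parallel (f m) (f m') -> m = m') /\
      (forall k (iota : 'I_k -> 'I_l) (eta : nat -> R[i]),
          admissible d iota eta -> exists m, parallel (wvec V r iota eta) (f m))) /\
  (* every eigenvector is, up to scaling, one of them or in the nullspace *)
  (forall w : 'I_n -> R[i], is_eigenvector d T w ->
      (exists k (iota : 'I_k -> 'I_l) (eta : nat -> R[i]),
          admissible d iota eta /\ parallel (wvec V r iota eta) w)
      \/ in_nullspace V w) /\
  (* nonzero nullspace elements are eigenvectors *)
  (forall w : 'I_n -> R[i], (exists a, w a != 0) -> in_nullspace V w ->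
      is_eigenvector d T w).
Proof.
move=> d3 n1 l1 ln HV Hl Hr T.
have [m dm] : exists m, d = m.+2 by exists (d - 2)%N; lia.
subst d.
have Em : (m.+2 - 2 = m)%N by lia.
have m0 : (0 < m)%N by lia.
rewrite Em in Hr.
have Hr0 i : r i != 0.
  apply/eqP => E; have := Hr i; rewrite E expr0n (negbTE (lt0n_neq0 m0)) /= => /esym/eqP.
  by rewrite (negbTE (rc_neq0 (Hl i))).
have [z pz] := prim_exists R m0.
have Hgood k (iota : 'I_k -> 'I_l) eta : admissible m.+2 iota eta ->
    good r m (yvec r iota eta).
  by move=> adm; have := adm_good Hr0 adm; rewrite Em.
have Hadm y : good r m y -> exists k (iota : 'I_k -> 'I_l) (eta : nat -> R[i]),
    admissible m.+2 iota eta /\ forall i, yvec r iota eta i = y i.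
  by move=> gy; apply: good_adm => //; rewrite Em.
split.
  move=> k iota eta adm; have [Hne Hy _] := Hgood _ _ _ adm.
  exact: (eig_of_y (y := yvec r iota eta) HV Hr Hne Hy).
split.
  have hN : #|Aset l m| = (((m.+2).-1 ^ l - 1) %/ (m.+2 - 2))%N.
    by rewrite card_A // Em /= -geom mulKn.
  pose g q := @enum_val _ (mem (Aset l m)) (cast_ord (esym hN) q).
  have gA q : g q \in Aset l m by apply: enum_valP.
  exists (fun q => VT V (yg z r (g q))); split.
    move=> q; have [k [iota [eta [adm E]]]] := Hadm _ (inA_good m0 pz Hr0 (gA q)).
    exists k, iota, eta; split => //.
    by apply: functional_extensionality => a; apply: eq_bigr => i _; rewrite E.
  split.
    move=> q q' [c [c0 Hc]].
    have Hy i : yg z r (g q') i = c * yg z r (g q) i.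
      rewrite -(Vmul_VT (yg z r (g q')) HV) -(Vmul_VT (yg z r (g q)) HV) -Vmul_lin.
      by apply: eq_bigr => a _; rewrite Hc.
    have := par_good (inA_good m0 pz Hr0 (gA q)) (inA_good m0 pz Hr0 (gA q')) Hy.
    move=> Eg; have : g q = g q'.
      apply/ffunP => i; apply: (e_inj m0 pz); have := Eg i.
      by rewrite /yg => /(mulIf (invr_neq0 (Hr0 i))).
    by move/enum_val_inj/cast_ord_inj.
  move=> k iota eta adm.
  have [g0 [g0A Eg0]] := good_inA m0 pz Hr0 (Hgood _ _ _ adm).
  exists (cast_ord hN (enum_rank_in g0A g0)); exists 1; split; first exact: oner_neq0.
  move=> a; rewrite mul1r /g cast_ordK enum_rankK_in //.
  by rewrite /VT /wvec; apply: eq_bigr => i _; rewrite Eg0.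
split.
  move=> w Hw; case: (eig_classify HV Hl Hw) => [H0|[Hw2 [mu [mu0 Hmu]]]].
    by right => i; apply: H0.
  left; set zz := Vmul V w in Hw2 Hmu.
  have [a0 wa0] := Hw.1.
  have [i0 zi0] : exists i, zz i != 0.
    case: (pickP (fun i => zz i != 0)) => [i Hi|H0]; first by exists i.
    case/negP: wa0; rewrite Hw2 /VT big1 // => i _.
    by have := H0 i => /negbFE/eqP ->; rewrite mulr0.
  case: (@arg_maxnP _ i0 (fun i => zz i != 0) (fun i => nat_of_ord i) zi0) => p zp Hmax.
  set c := zz p * r p.
  have c0 : c != 0 by rewrite mulf_neq0.
  pose y i := zz i / c.
  have gy : good r m y.
    split.
    - by exists p; rewrite /y mulf_neq0 // invr_eq0.
    - move=> i; rewrite /y mulf_eq0 invr_eq0 (negbTE c0) orbF => zi.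
      rewrite mulrAC exprMn exprVn /c !exprMn !Hr [zz i ^+ m * _]mulrC Hmu //.
      by rewrite [zz p ^+ m * _]mulrC Hmu // mulfV.
    - exists p; split; first by rewrite /y mulrAC divff.
      move=> i pi; rewrite /y; case: (eqVneq (zz i) 0) => [->|zi]; first by rewrite mul0r.
      by have /= := Hmax i zi; rewrite leqNgt pi.
  have [k [iota [eta [adm E]]]] := Hadm _ gy.
  exists k, iota, eta; split => //; exists c; split => // a.
  rewrite Hw2 /wvec big_distrr /=; apply: eq_bigr => i _.
  by rewrite E /y mulrCA [c * _]mulrC divfK.
move=> w Hw Hnull; split => //; exists 0 => a.
rewrite tensor_applyE mul0r big1 // => i _.
by rewrite /Vmul /= Hnull expr0n /= mulr0 mulr0.
Qed.
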